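(* For every strictly positive formula $A$ and every $\alpha\le\omega$, $A\nvdash_{\mathbf{RC\omega}}\alpha A$.
   Context: Strictly positive formulas: $A::= p\mid \top\mid (A\land B)\mid \alpha A$, $\alpha\le\omega$. $\mathbf{RC\omega}$: $A\vdash A$; $A\vdash\top$; cut; $A\land B\vdash A$; $A\land B\vdash B$; from $A\vdash B$, $A\vdash C$ infer $A\vdash B\land C$; from $A\vdash B$ infer $\alpha A\vdash\alpha B$; $\alpha\alpha A\vdash\alpha A$; $\alpha\beta A\vdash\beta A$, $\beta\alpha A\vdash\beta A$ for $\alpha\ge\beta$; $\alpha A\land\beta B\vdash\alpha(A\land\beta B)$ for $\alpha>\beta$; $\alpha A\vdash\beta A$ for $\alpha>\beta$; $\omega A\vdash A$. *)

(* Defs.v *)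
From Stdlib Require Import Arith.

(* Modality indices: ordinals alpha <= omega, i.e. natural numbers n < omega
   (Fin n) or omega itself (Om). *)
Inductive idx : Type :=
| Fin : nat -> idx
| Om : idx.

Definition idx_lt (a b : idx) : Prop :=
  match a, b with
  | Fin m, Fin n => m < n
  | Fin _, Om => True
  | Om, _ => False
  end.

Definition idx_le (a b : idx) : Prop := idx_lt a b \/ a = b.

Inductive fml : Type :=
| Var : nat -> fml
| Top : fml
| And : fml -> fml -> fml
| Dia : idx -> fml -> fml.

Inductive RC : fml -> fml -> Prop :=
| rc_refl : forall A, RC A A
| rc_top : forall A, RC A Top
| rc_cut : forall A B C, RC A B -> RC B C -> RC A C
| rc_andL1 : forall A B, RC (And A B) A
| rc_andL2 : forall A B, RC (And A B) B
| rc_andR : forall A B C, RC A B -> RC A C -> RC A (And B C)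
| rc_mono : forall a A B, RC A B -> RC (Dia a A) (Dia a B)
| rc_trans : forall a A, RC (Dia a (Dia a A)) (Dia a A)
| rc_absL : forall a b A, idx_le b a -> RC (Dia a (Dia b A)) (Dia b A)
| rc_absR : forall a b A, idx_le b a -> RC (Dia b (Dia a A)) (Dia b A)
| rc_poly : forall a b A B, idx_lt b a ->
    RC (And (Dia a A) (Dia b B)) (Dia a (And A (Dia b B)))
| rc_monot : forall a b A, idx_lt b a -> RC (Dia a A) (Dia b A)
| rc_omega : forall A, RC (Dia Om A) A.

(* Main.v *)
Require Import Defs.
From Stdlib Require Import List Arith Lia.
Import ListNotations.

Lemma lt_trans' a b c : idx_lt a b -> idx_lt b c -> idx_lt a c.
Proof. destruct a, b, c; simpl; auto; try lia; tauto. Qed.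
Lemma lt_irrefl' a : ~ idx_lt a a.
Proof. destruct a; simpl; auto; lia. Qed.
Lemma le_trans' a b c : idx_le a b -> idx_le b c -> idx_le a c.
Proof. unfold idx_le; intros [H|H] [H'|H']; subst; auto; left; eapply lt_trans'; eauto. Qed.
Lemma lt_le_trans' a b c : idx_lt a b -> idx_le b c -> idx_lt a c.
Proof. intros H [H'|H']; subst; auto; eapply lt_trans'; eauto. Qed.
Lemma le_lt_trans' a b c : idx_le a b -> idx_lt b c -> idx_lt a c.
Proof. intros [H|H] H'; subst; auto; eapply lt_trans'; eauto. Qed.
Lemma le_Om a : idx_le a Om.
Proof. destruct a; [left; simpl; auto | right; auto]. Qed.

Fixpoint conj (F : fml) : list (idx * fml) :=
  match F with
  | Var _ => [] | Top => []
  | And B C => conj B ++ conj C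
  | Dia b B => [(b, B)]
  end.

Fixpoint valid (F : fml) (p : list (idx * fml)) : Prop :=
  match p with
  | [] => True
  | (b, C) :: q => In (b, C) (conj F) /\ valid C q
  end.

Fixpoint endf (F : fml) (p : list (idx * fml)) : fml :=
  match p with
  | [] => F
  | (_, C) :: q => endf C q
  end.

Lemma valid_app F w v : valid F (w ++ v) <-> valid F w /\ valid (endf F w) v.
Proof.
  revert F; induction w as [|[b C] w IH]; intros F; simpl.
  - tauto.
  - rewrite IH. tauto.
Qed.

Lemma endf_app F w v : endf F (w ++ v) = endf (endf F w) v.
Proof. revert F; induction w as [|[b C] w IH]; intros F; simpl; auto. Qed.

Definition Rb (A0 : fml) (b : idx) (s t : list (idx * fml)) : Prop :=
  exists w u v, s = w ++ u /\ t = w ++ v /\ v <> [] /\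
    Forall (fun p => idx_lt b (fst p)) u /\
    Forall (fun p => idx_le b (fst p)) v /\ valid A0 t.

Fixpoint sat (A0 : fml) (s : list (idx * fml)) (F : fml) : Prop :=
  match F with
  | Var _ => True | Top => True
  | And B C => sat A0 s B /\ sat A0 s C
  | Dia b B => exists t, Rb A0 b s t /\ sat A0 t B
  end.

Lemma Rb_mono A0 a b s t : idx_le b a -> Rb A0 a s t -> Rb A0 b s t.
Proof.
  intros Hba [w [u [v [H1 [H2 [H3 [H4 [H5 H6]]]]]]]].
  exists w, u, v; repeat split; auto.
  - eapply Forall_impl; [|exact H4]. intros p Hp; eapply le_lt_trans'; eauto.
  - eapply Forall_impl; [|exact H5]. intros p Hp; eapply le_trans'; eauto.
Qed.

Lemma app_ne {A : Type} (l m : list A) : m <> [] -> l ++ m <> [].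
Proof. intros H E; apply app_eq_nil in E; tauto. Qed.

Lemma Rb_trans A0 b s t z : Rb A0 b s t -> Rb A0 b t z -> Rb A0 b s z.
Proof.
  intros [w1 [u1 [v1 [Hs [Ht [Hv1 [Fu1 [Fv1 _]]]]]]]]
         [w2 [u2 [v2 [Ht' [Hz [Hv2 [Fu2 [Fv2 Hval]]]]]]]].
  subst s z. rewrite Ht in Ht'.
  apply app_eq_app in Ht' as [d [[E1 E2]|[E1 E2]]]; subst.
  - exists w2, (d ++ u1), v2. rewrite app_assoc. repeat split; auto.
    apply Forall_app in Fu2 as [Fd _]. apply Forall_app; auto.
  - exists w1, u1, (d ++ v2). rewrite app_assoc. repeat split; auto.
    all: try (apply app_ne; auto).
    all: try (apply Forall_app in Fv1 as [Fd _]; apply Forall_app; auto).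
    all: try (rewrite <- app_assoc; auto).
Qed.

Lemma Rb_poly A0 a b s t z : idx_lt b a -> Rb A0 a s t -> Rb A0 b s z -> Rb A0 b t z.
Proof.
  intros Hba [w1 [u1 [v1 [Hs [Ht [Hv1 [Fu1 [Fv1 Hvt]]]]]]]]
         [w2 [u2 [v2 [Hs' [Hz [Hv2 [Fu2 [Fv2 Hval]]]]]]]].
  subst s t z.
  apply app_eq_app in Hs' as [d [[E1 E2]|[E1 E2]]]; subst.
  - exists w2, (d ++ v1), v2. rewrite app_assoc. repeat split; auto.
    apply Forall_app in Fu2 as [Fd _]. apply Forall_app; split; auto.
    eapply Forall_impl; [|exact Fv1]. intros p Hp; eapply lt_le_trans'; eauto.
  - exists w1, v1, (d ++ v2). rewrite app_assoc. repeat split; auto.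
    all: try (eapply Forall_impl; [|exact Fv1]; intros p Hp; eapply lt_le_trans'; eauto; fail).
    all: try (apply app_ne; auto; fail).
    all: try (rewrite <- app_assoc; auto; fail).
    apply Forall_app in Fu1 as [Fd _]. apply Forall_app; split; auto.
    eapply Forall_impl; [|exact Fd]. intros p Hp; left; eapply lt_trans'; eauto.
Qed.

Lemma sat_omega A0 s t B : Rb A0 Om s t -> sat A0 t B -> sat A0 s B.
Proof.
  intros R; induction B; simpl; auto.
  - intros [H1 H2]; auto.
  - intros [z [R2 H]]. exists z; split; auto.
    eapply Rb_trans; [|exact R2]. eapply Rb_mono; [apply le_Om|exact R].
Qed.

Lemma sound A0 B C : RC B C -> forall s, sat A0 s B -> sat A0 s C.
Proof.
  induction 1; intros s Hs; simpl in *; auto.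
  - tauto.
  - tauto.
  - destruct Hs as [t [R H0]]; eauto.
  - destruct Hs as [t [R1 [z [R2 H]]]]; exists z; split; auto; eapply Rb_trans; eauto.
  - destruct Hs as [t [R1 [z [R2 H']]]]; exists z; split; auto.
    eapply Rb_trans; [eapply Rb_mono; eauto|]; eauto.
  - destruct Hs as [t [R1 [z [R2 H']]]]; exists z; split; auto.
    eapply Rb_trans; [eauto|]; eapply Rb_mono; eauto.
  - destruct Hs as [[t [R1 H1]] [z [R2 H2]]].
    exists t; split; auto; split; auto; exists z; split; auto; eapply Rb_poly; eauto.
  - destruct Hs as [t [R H0]]; exists t; split; auto; eapply Rb_mono; [left|]; eauto.
  - destruct Hs as [t [R H0]]; eapply sat_omega; eauto.
Qed.

Lemma sat_node A0 F : forall w, valid A0 w ->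
  (forall x, In x (conj F) -> In x (conj (endf A0 w))) -> sat A0 w F.
Proof.
  induction F; intros w Hv Hin; simpl; auto.
  - split; [apply IHF1|apply IHF2]; auto; intros x Hx; apply Hin; simpl;
      apply in_or_app; auto.
  - exists (w ++ [(i, F)]); split.
    + exists w, [], [(i, F)]; repeat split; auto.
      * rewrite app_nil_r; auto.
      * discriminate.
      * constructor; [right; reflexivity|constructor].
      * apply valid_app; split; auto; simpl; split; auto; apply Hin; simpl; auto.
    + apply IHF.
      * apply valid_app; split; auto; simpl; split; auto; apply Hin; simpl; auto.
      * rewrite endf_app; simpl; auto.
Qed.

Lemma sat_conj A0 s F b C : sat A0 s F -> In (b, C) (conj F) -> sat A0 s (Dia b C).
Proof.
  induction F; simpl; try tauto.
  - intros [H1 H2] Hin; apply in_app_or in Hin as [H|H]; auto.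
    + apply IHF1; auto.
    + apply IHF2; auto.
  - intros H [E|[]]; inversion E; subst; auto.
Qed.

Definition Qp A0 F := forall w v, valid A0 (w ++ v) -> endf A0 w = F -> v <> [] ->
  ~ sat A0 (w ++ v) F.

Lemma Q_step A0 F : (forall b C, In (b, C) (conj F) -> Qp A0 C) -> Qp A0 F.
Proof.
  intros IH w v Hval Hend Hne Hsat.
  destruct v as [|[b C] v']; [congruence|].
  apply valid_app in Hval as Hv. destruct Hv as [_ [Hin _]].
  rewrite Hend in Hin.
  destruct (sat_conj _ _ _ _ _ Hsat Hin) as [z [R Hz]].
  destruct R as [w2 [u2 [v2 [E [Ez [Hv2 [Fu2 [Fv2 Hvz]]]]]]]].
  apply app_eq_app in E as [l [[E1 E2]|[E1 E2]]].
  - subst u2. apply Forall_app in Fu2 as [_ F2]. apply Forall_inv in F2.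
    simpl in F2; apply lt_irrefl' in F2; auto.
  - destruct l as [|p l'].
    + simpl in E2; subst u2. apply Forall_inv in Fu2; simpl in Fu2;
        apply lt_irrefl' in Fu2; auto.
    + simpl in E2; inversion E2; subst p v'.
      subst w2 z.
      apply (IH b C Hin (w ++ [(b, C)]) (l' ++ v2)).
      * rewrite <- app_assoc; simpl; rewrite <- app_assoc in Hvz; exact Hvz.
      * rewrite endf_app; simpl; auto.
      * apply app_ne; auto.
      * rewrite <- app_assoc; simpl; rewrite <- app_assoc in Hz; exact Hz.
Qed.

Lemma Q_all A0 F : Qp A0 F /\ (forall b C, In (b, C) (conj F) -> Qp A0 C).
Proof.
  assert (K : forall F, (forall b C, In (b, C) (conj F) -> Qp A0 C) ->
     Qp A0 F /\ (forall b C, In (b, C) (conj F) -> Qp A0 C))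
    by (intros G H; split; auto; apply Q_step; auto).
  induction F; apply K; simpl; try tauto.
  - intros b C Hin; apply in_app_or in Hin as [H|H];
      [apply (proj2 IHF1 b)|apply (proj2 IHF2 b)]; auto.
  - intros b C [E|[]]; inversion E; subst; apply IHF.
Qed.

Theorem lemma6p1 : forall (A : fml) (a : idx), ~ RC A (Dia a A).
Proof.
  intros A a H.
  assert (Hs : sat A [] A) by (apply sat_node; simpl; auto).
  apply (sound A _ _ H) in Hs.
  destruct Hs as [t [[w [u [v [E1 [E2 [Hne [_ [_ Hv]]]]]]]] Ht]].
  symmetry in E1; apply app_eq_nil in E1 as [-> ->]. simpl in E2; subst t.
  apply (proj1 (Q_all A A) [] v); simpl; auto.
Qed.
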